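(* Consider a Gibbs-type feature model with parameters $\alpha<1$, $\theta>-\alpha$ and weights $(V_{n,k})$. Let $\mathbf Z^{(n)}$ be a sample of $n$ individuals with $K_n=k$ observed features $X_1,\dots,X_k$ of frequencies $m_1,\dots,m_k$. Let $Y_{n+1}$ be the number of features displayed by individual $n+1$ that are not among $X_1,\dots,X_k$, and let $A_{n+1,\ell}\in\{0,1\}$ indicate whether individual $n+1$ displays $X_\ell$. Then, for all $y\in\mathbb N_0$ and $(a_1,\dots,a_k)\in\{0,1\}^k$, $$P\big((Y_{n+1},A_{n+1,1},\dots,A_{n+1,k})=(y,a_1,\dots,a_k)\mid \mathbf Z^{(n)}\big)=\binom{k+y}{k}\frac{V_{n+1,k+y}}{V_{n,k}}\{(\theta+\alpha)_n\}^y(\theta+n)^k\prod_{\ell=1}^k\mathscr B\Big(a_\ell;\frac{m_\ell-\alpha}{\theta+n}\Big),$$ where $\mathscr B(a;p)=p^a(1-p)^{1-a}$.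
   Context: Notation: $(x)_m=\Gamma(x+m)/\Gamma(x)$ (Pochhammer symbol); $[n]=\{1,\dots,n\}$. Individuals $i=1,2,\dots$ each display a finite (possibly empty) set of features, identified by almost surely distinct labels. For the sample $\mathbf Z^{(n)}=(Z_1,\dots,Z_n)$ of the first $n$ individuals, $K_n$ is the number of distinct features displayed, labelled $X_1,\dots,X_{K_n}$ in order of appearance; $A_{i,\ell}\in\{0,1\}$ indicates whether individual $i$ displays $X_\ell$, and $m_\ell=\sum_{i=1}^nA_{i,\ell}\in[n]$. The ordered feature allocation is $F_n=(B_{n,1},\dots,B_{n,K_n})$, $B_{n,\ell}=\{i\in[n]:A_{i,\ell}=1\}$. The model admits an exchangeable feature probability function (EFPF) if there are symmetric functions $\pi_n:\bigcup_{k\ge0}[n]^k\to[0,1]$ with $P(F_n=f_n)=\pi_n(m_1,\dots,m_k)$ for every ordered feature allocation $f_n$ of $[n]$ (a sequence of $k$ nonempty subsets of $[n]$ with sizes $m_1,\dots,m_k$), all orderings of the same collection of sets being equally likely; the laws for different $n$ are consistent (the law for $n$ individuals is the marginal of that for $n+1$). The model is a Gibbs-type feature model with parameters $\alpha<1$, $\theta>-\alpha$ if $\pi_n(m_1,\dots,m_k)=V_{n,k}\prod_{\ell=1}^k(1-\alpha)_{m_\ell-1}(\theta+\alpha)_{n-m_\ell}$ for nonnegative weights $(V_{n,k})_{n\ge1,k\ge0}$ satisfying $V_{n,k}=\sum_{j\ge0}\frac{(k+j)!}{j!\,k!}\{(\theta+\alpha)_n\}^j(\theta+n)^kV_{n+1,k+j}$.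 *)

(* Defs.v *)
From HB Require Import structures.
From mathcomp Require Import all_boot all_order all_algebra.
From mathcomp Require Import all_classical all_reals all_analysis.
Set Implicit Arguments. Unset Strict Implicit. Unset Printing Implicit Defensive.
Import Order.TTheory GRing.Theory Num.Theory.
Local Open Scope ring_scope.

Definition poch {R : pzRingType} (x : R) (m : nat) : R := \prod_(i < m) (x + i%:R).

(* An ordered feature allocation of [n] = {0,...,n-1} is a sequence of
   nonempty subsets of 'I_n. *)
Definition is_ofa (n : nat) (f : seq {set 'I_n}) : bool := all (fun B => B != finset.set0) f.

Definition gibbs_efpf {R : realType} (alpha theta : R) (V : nat -> nat -> R)
  (n : nat) (ms : seq nat) : R :=
  V n (size ms) * \prod_(m <- ms) (poch (1 - alpha) (m - 1) * poch (theta + alpha) (n - m)%N).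

(* Restriction of a subset of [n+1] to [n] (individual n+1 is ord_max). *)
Definition res_set (n : nat) (B : {set 'I_n.+1}) : {set 'I_n} :=
  [set i : 'I_n | widen_ord (leqnSn n) i \in B].

Definition old_blocks (n : nat) (g : seq {set 'I_n.+1}) : seq {set 'I_n.+1} :=
  [seq B <- g | res_set B != finset.set0].

Definition restrict_ofa (n : nat) (g : seq {set 'I_n.+1}) : seq {set 'I_n} :=
  map (fun B : {set 'I_n.+1} => @res_set n B) (@old_blocks n g).

Definition new_count (n : nat) (g : seq {set 'I_n.+1}) : nat :=
  count (fun B => res_set B == finset.set0) g.

Definition old_indic (n : nat) (g : seq {set 'I_n.+1}) : seq bool :=
  map (fun B : {set 'I_n.+1} => ord_max \in B) (@old_blocks n g).

Definition cond_prob {R : realType} (p : forall n, seq {set 'I_n} -> R) (n : nat)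
  (f : seq {set 'I_n}) (E : set (seq {set 'I_n.+1})) : \bar R :=
  ((\esum_(g in E `&` [set g | restrict_ofa g = f]) (p n.+1 g)%:E)
     * ((p n f)^-1)%:E)%E.

Definition bern {R : pzRingType} (a : bool) (q : R) : R := q ^+ a * (1 - q) ^+ (1 - a).

(* Main.v *)
Require Import Defs.
From HB Require Import structures.
From mathcomp Require Import all_boot all_order all_algebra.
From mathcomp Require Import all_classical all_reals all_analysis.
From mathcomp Require Import ring lra.
Import Order.TTheory GRing.Theory Num.Theory.
Import numFieldNormedType.Exports.

Local Open Scope ring_scope.

Set Implicit Arguments. Unset Strict Implicit.
Section Comb.
Variable n : nat.
Local Notation T := {set 'I_n.+1}.
Local Notation wid := (widen_ord (leqnSn n)).

Definition liftB (F : {set 'I_n}) (b : bool) : T :=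
  (wid @: F) :|: (if b then [set ord_max] else finset.set0).

Lemma wid_inj : injective wid.
Proof. by move=> i j /(congr1 val) /= E; apply: val_inj. Qed.

Lemma wid_neq (j : 'I_n) : wid j != ord_max.
Proof. by rewrite -(inj_eq val_inj) /= neq_ltn ltn_ord. Qed.

Lemma ord_split (i : 'I_n.+1) : i != ord_max -> exists j : 'I_n, i = wid j.
Proof.
move=> H; have Hi : (i < n)%N.
  by move: H (ltn_ord i); rewrite -(inj_eq val_inj) /= ltnS leq_eqVlt => /negbTE ->.
by exists (Ordinal Hi); apply: val_inj.
Qed.

Lemma res_liftB F b : res_set (liftB F b) = F.
Proof.
apply/setP => j; rewrite /res_set /liftB inE finset.in_setU.
rewrite (mem_imset _ _ wid_inj).
case: b; rewrite ?finset.in_set1 ?finset.in_set0 ?orbF //.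
by apply/orb_idr => /eqP E; move: (wid_neq j); rewrite E eqxx.
Qed.

Lemma max_liftB F b : (ord_max \in liftB F b) = b.
Proof.
rewrite /liftB finset.in_setU; case: b; rewrite ?finset.in_set1 ?eqxx ?orbT //.
rewrite finset.in_set0 orbF; apply/negP => /imsetP [j _ E].
by move: (wid_neq j); rewrite -E eqxx.
Qed.

Lemma liftB_res (B : T) : B = liftB (res_set B) (ord_max \in B).
Proof.
apply/setP => i; case: (eqVneq i ord_max) => [->|Hi]; first by rewrite max_liftB.
have [j ->] := ord_split Hi.
rewrite /liftB finset.in_setU (mem_imset _ _ wid_inj).
rewrite /res_set inE.
case: (ord_max \in B); rewrite ?finset.in_set1 ?finset.in_set0 ?orbF //.
by apply/esym/orb_idr => /eqP E; move: (wid_neq j); rewrite E eqxx.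
Qed.

Lemma eq_liftB (B : T) F b : (B == liftB F b) = (res_set B == F) && ((ord_max \in B) == b).
Proof.
apply/eqP/andP => [->|[/eqP <- /eqP <-]]; last exact: liftB_res.
by rewrite res_liftB max_liftB.
Qed.

Lemma card_liftB F b : #|liftB F b| = (#|F| + b)%N.
Proof.
rewrite /liftB; case: b.
  rewrite finset.setUC cardsU1 card_imset; last exact: wid_inj.
  rewrite addnC; congr (_ + _)%N; apply/eqP; rewrite eqb1.
  apply/negP => /imsetP [j _ E]; by move: (wid_neq j); rewrite -E eqxx.
by rewrite finset.setU0 card_imset ?addn0 //; exact: wid_inj.
Qed.

Lemma res_empty (B : T) : res_set B == finset.set0 -> (B == finset.set0) || (B == [set ord_max]).
Proof.
move=> /eqP H; rewrite (liftB_res B) H.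
have -> : liftB finset.set0 (ord_max \in B) = if ord_max \in B then [set ord_max] else finset.set0.
  by rewrite /liftB imset0 finset.set0U.
by case: (ord_max \in B); rewrite eqxx ?orbT.
Qed.

Lemma res_set0 : res_set (finset.set0 : T) = finset.set0.
Proof. by apply/setP => j; rewrite !inE. Qed.

Lemma res_max : res_set ([set ord_max] : T) = finset.set0.
Proof. by apply/setP => j; rewrite !inE (negbTE (wid_neq j)). Qed.

Definition news (s : seq (seq T)) : seq (seq T) :=
  [seq finset.set0 :: g | g <- s] ++ [seq [set ord_max] :: g | g <- s].

Fixpoint LL (f : seq {set 'I_n}) (a : seq bool) (y : nat) {struct f} : seq (seq T) :=
  let rest := match f, a with F :: f', b :: a' => fun y => [seq liftB F b :: g | g <- LL f' a' y]
     | _, _ => fun _ => [::] end in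
  (fix Ly y := match y with 0 => (if (f == [::]) && (a == [::]) then [:: [::]] else [::]) ++ rest 0
   | y'.+1 => news (Ly y') ++ rest y'.+1 end) y.

Lemma LLE f a y : LL f a y =
  (if y is y'.+1 then news (LL f a y') else if (f == [::]) && (a == [::]) then [:: [::]] else [::])
  ++ (match f, a with F :: f', b :: a' => [seq liftB F b :: g | g <- LL f' a' y] | _, _ => [::] end).
Proof. by case: f => [|F f]; case: a => [|b a]; case: y. Qed.


Lemma mem_consmap (X : T) (s : seq (seq T)) (Y : T) g :
  (X :: g \in [seq Y :: h | h <- s]) = (X == Y) && (g \in s).
Proof.
apply/mapP/andP => [[h Hh [-> ->]]|[/eqP -> Hg]]; last by exists g.
by rewrite eqxx.
Qed.

Lemma nil_consmap (s : seq (seq T)) (Y : T) : ([::] \in [seq Y :: h | h <- s]) = false.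
Proof. by apply/mapP => [[h _]]. Qed.

Lemma restrict_cons (B : T) g : restrict_ofa (B :: g) =
  if res_set B != finset.set0 then res_set B :: restrict_ofa g else restrict_ofa g.
Proof. by rewrite /restrict_ofa /old_blocks /=; case: ifP. Qed.

Lemma indic_cons (B : T) g : old_indic (B :: g) =
  if res_set B != finset.set0 then (ord_max \in B) :: old_indic g else old_indic g.
Proof. by rewrite /old_indic /old_blocks /=; case: ifP. Qed.

Lemma count_cons (B : T) g : new_count (B :: g) = ((res_set B == finset.set0) + new_count g)%N.
Proof. by []. Qed.

Lemma mem_LL g f a y : all (fun F => F != finset.set0) f ->
  (g \in LL f a y) = [&& restrict_ofa g == f, new_count g == y & old_indic g == a].
Proof.
elim: g f a y => [|B g IH] f a y Hf.
  rewrite LLE mem_cat; case: y => [|y]; last first.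
    rewrite /news mem_cat !nil_consmap /=.
    by case: f Hf => [|F f]; case: a => [|b a] //= _; rewrite nil_consmap.
  by case: f Hf => [|F f]; case: a => [|b a] //= _; rewrite nil_consmap.
rewrite LLE mem_cat restrict_cons indic_cons count_cons.
have s0max : (finset.set0 : T) != [set ord_max].
  by apply/eqP => /setP /(_ ord_max); rewrite !inE eqxx.
have base0 : forall b : bool, (B :: g \in (if b then [:: [::]] else [::])) = false.
  by case.
case: (boolP (res_set B == finset.set0)) => HB /=.
  have Hnews : forall s, (B :: g \in news s) = (g \in s).
    move=> s; rewrite /news mem_cat !mem_consmap.
    case/orP: (res_empty HB) => /eqP ->; rewrite eqxx /=.
      by rewrite (negbTE s0max) /= orbF.
    by rewrite eq_sym (negbTE s0max).
  have Hrest : (B :: g \in match f, a with F :: f', b :: a' => [seq liftB F b :: g | g <- LL f' a' y] | _, _ => [::] end) = false.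
    case: f Hf => [|F f] Hf; case: a => [|b a] //.
    rewrite mem_consmap eq_liftB (eqP HB); move: Hf => /= /andP [HF _].
    by rewrite eq_sym (negbTE HF).
  rewrite Hrest orbF; clear Hrest; case: y => [|y]; first by rewrite base0 add1n andbF.
  by rewrite Hnews IH // add1n eqSS.
have Hnews : forall s, (B :: g \in news s) = false.
  move=> s; rewrite /news mem_cat !mem_consmap.
  apply/negbTE; apply/negP => /orP [] /andP [/eqP E _]; move: HB; rewrite E.
    by rewrite res_set0 eqxx.
  by rewrite res_max eqxx.
have -> : (B :: g \in (if y is y'.+1 then news (LL f a y') else if (f == [::]) && (a == [::]) then [:: [::]] else [::])) = false.
  by case: y => [|y]; rewrite ?base0 ?Hnews.
rewrite /= add0n.
case: f Hf => [|F f] Hf; case: a => [|b a] //=; rewrite ?andbF //.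
rewrite mem_consmap eq_liftB IH; last by case/andP: Hf.
by rewrite !eqseq_cons; do !case: eqP.
Qed.

Lemma consmap_uniq (X : T) s : uniq s -> uniq [seq X :: h | h <- s].
Proof. by move=> Hs; rewrite map_inj_uniq // => ? ? []. Qed.

Lemma consmap_disj (X Y : T) s t : X != Y -> ~~ has (mem [seq X :: h | h <- s]) [seq Y :: h | h <- t].
Proof.
move=> XY; apply/hasPn => _ /mapP [h _ ->]; apply/negP => /mapP [h' _ [E _]].
by move: XY; rewrite E eqxx.
Qed.

Lemma s0max : (finset.set0 : T) != [set ord_max].
Proof. by apply/eqP => /setP /(_ ord_max); rewrite !inE eqxx. Qed.

Lemma uniq_news s : uniq s -> uniq (news s).
Proof.
move=> Hs; rewrite /news cat_uniq !consmap_uniq //= andbT.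
exact: consmap_disj s0max.
Qed.

Lemma liftB_neq F b (X : T) : F != finset.set0 -> res_set X = finset.set0 -> X != liftB F b.
Proof.
move=> HF HX; apply/eqP => E; move: HF; by rewrite -HX E res_liftB eqxx.
Qed.

Lemma uniq_LL f a y : all (fun F => F != finset.set0) f -> uniq (LL f a y).
Proof.
elim: f a y => [|F f IH] a y Hf.
  case: a => [|b a]; elim: y => [|y IHy]; rewrite LLE //= ?cats0 //.
  all: try exact: uniq_news.
case/andP: Hf => HF Hf.
case: a => [|b a].
  by elim: y => [|y IHy]; rewrite LLE //= ?cats0 //; exact: uniq_news.
elim: y => [|y IHy]; rewrite LLE; first by rewrite /=; apply: consmap_uniq; exact: IH.
rewrite cat_uniq uniq_news // consmap_uniq ?IH // andbT /=.
have H1 : liftB F b != finset.set0 by rewrite eq_sym liftB_neq ?res_set0.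
have H2 : liftB F b != [set ord_max] by rewrite eq_sym liftB_neq ?res_max.
apply/hasPn => x /mapP [h _ ->]; rewrite /news mem_cat !mem_consmap.
by rewrite (negbTE H1) (negbTE H2).
Qed.

Section Sum.
Variables (R : realType) (alpha theta : R).

Definition cw (B : T) : R := (B != finset.set0)%:R * poch (1 - alpha) (#|B| - 1)
   * poch (theta + alpha) (n.+1 - #|B|).

Lemma poch0 (x : R) : poch x 0 = 1.
Proof. by rewrite /poch big_ord0. Qed.

Lemma pochS (x : R) m : poch x m.+1 = poch x m * (x + m%:R).
Proof. by rewrite /poch big_ord_recr. Qed.

Lemma poch_ge0 (x : R) m : 0 <= x -> 0 <= poch x m.
Proof. by move=> Hx; apply: prodr_ge0 => i _; apply: addr_ge0. Qed.

Lemma cw0 : cw finset.set0 = 0.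
Proof. by rewrite /cw eqxx !mul0r. Qed.

Lemma cwmax : cw [set ord_max] = poch (theta + alpha) n.
Proof.
rewrite /cw cards1 subnn poch0 subSS subn0 mulr1.
have -> : ([set ord_max] : T) != finset.set0 by rewrite eq_sym s0max.
by rewrite mul1r.
Qed.

Lemma sum_consmap X s : \sum_(g <- [seq X :: h | h <- s]) \prod_(B <- g) cw B =
  cw X * \sum_(g <- s) \prod_(B <- g) cw B.
Proof. by rewrite big_map mulr_sumr; apply: eq_bigr => g _; exact: big_cons. Qed.

Lemma sum_news s : \sum_(g <- news s) \prod_(B <- g) cw B =
  poch (theta + alpha) n * \sum_(g <- s) \prod_(B <- g) cw B.
Proof. by rewrite /news big_cat /= !sum_consmap cw0 cwmax mul0r add0r. Qed.

Lemma sum_LL f a y : size a = size f ->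
  \sum_(g <- LL f a y) \prod_(B <- g) cw B =
  'C(size f + y, size f)%:R * poch (theta + alpha) n ^+ y *
  \prod_(l < size f) cw (liftB (nth finset.set0 f l) (nth false a l)).
Proof.
elim: f a y => [|F f IH] [|b a] y Hs; try by case: Hs.
  elim: y => [|y IHy].
    by rewrite LLE /= big_seq1 big_nil big_ord0 expr0 !mulr1 bin0.
  have -> : LL [::] [::] y.+1 = news (LL [::] [::] y) by rewrite LLE cats0.
  by rewrite sum_news IHy !big_ord0 !mulr1 !bin0 !mul1r exprS.
case: Hs => Hs.
set D := \prod_(i < size f) cw (liftB (nth finset.set0 f i) (nth false a i)).
have Hprod : \prod_(l < size (F :: f)) cw (liftB (nth finset.set0 (F :: f) l) (nth false (b :: a) l))
   = cw (liftB F b) * D by rewrite big_ord_recl.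
rewrite Hprod.
have Hsz : size (F :: f) = (size f).+1 by [].
rewrite Hsz.
elim: y => [|y IHy].
  have -> : LL (F :: f) (b :: a) 0 = [seq liftB F b :: g | g <- LL f a 0] by rewrite LLE.
  by rewrite sum_consmap IH // !addn0 !binn !expr0 !mulr1 !mul1r.
have -> : LL (F :: f) (b :: a) y.+1 = news (LL (F :: f) (b :: a) y) ++
   [seq liftB F b :: g | g <- LL f a y.+1] by rewrite LLE.
rewrite big_cat sum_news sum_consmap IH // IHy -/D.
set d := cw (liftB F b).
set P := poch (theta + alpha) n.
have -> : ((size f).+1 + y.+1 = (size f + y.+1).+1)%N by rewrite addSn.
rewrite binS natrD.
have -> : ((size f).+1 + y = size f + y.+1)%N by rewrite addSn addnS.
rewrite exprS.
rewrite /=; ring.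
Qed.

Lemma cw_lift (F : {set 'I_n}) b : F != finset.set0 -> theta + n%:R != 0 ->
  cw (liftB F b) = (theta + n%:R) * bern b ((#|F|%:R - alpha) / (theta + n%:R))
     * (poch (1 - alpha) (#|F| - 1) * poch (theta + alpha) (n - #|F|)).
Proof.
move=> HF Hn.
have Hm1 : (0 < #|F|)%N by rewrite card_gt0.
have Hmn : (#|F| <= n)%N by rewrite -[X in (_ <= X)%N](card_ord n) max_card.
have Hl : liftB F b != finset.set0.
  by apply/eqP => E; move: HF; rewrite -(res_liftB F b) E res_set0 eqxx.
rewrite /cw card_liftB /bern.
move: Hl; case: b => Hl; rewrite Hl mul1r.
  rewrite -(prednK Hm1) in Hmn *.
  set m := #|F|.-1.
  rewrite addn1 !subn1 /= pochS subSS expr1 expr0 mulr1.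
  rewrite -addn1 natrD.
  by field.
rewrite -(prednK Hm1) in Hmn *.
set m := #|F|.-1.
rewrite addn0 !subn1 /= subSn // pochS expr0 expr1 mul1r natrB // -addn1 natrD.
by field.
Qed.

End Sum.

End Comb.
Unset Implicit Arguments.
Local Open Scope classical_set_scope.

Theorem theorem1 (R : realType) (alpha theta : R) (V : nat -> nat -> R)
  (p : forall n : nat, seq {set 'I_n} -> R)
  (halpha : alpha < 1) (htheta : - alpha < theta)
  (hV0 : forall n k, (0 < n)%N -> 0 <= V n k)
  (hVrec : forall n k, (0 < n)%N ->
     (fun N : nat => \sum_(j < N)
        ('C(k + j, k)%:R * (poch (theta + alpha) n) ^+ j * (theta + n%:R) ^+ k
          * V n.+1 (k + j)%N)) @ \oo --> V n k)
  (hEFPF : forall n (f : seq {set 'I_n}), (0 < n)%N ->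
     p n f = if is_ofa f then gibbs_efpf alpha theta V n (map (fun B : {set 'I_n} => #|B|) f) else 0)
  (hprob : forall n, (0 < n)%N -> \esum_(f in [set: seq {set 'I_n}]) (p n f)%:E = 1%E)
  (hcons : forall n (f : seq {set 'I_n}), (0 < n)%N ->
     (p n f)%:E = \esum_(g in [set g | restrict_ofa g = f]) (p n.+1 g)%:E)
  (n : nat) (hn : (0 < n)%N) (f : seq {set 'I_n}) (hf : 0 < p n f)
  (y : nat) (a : seq bool) (ha : size a = size f) :
  cond_prob p f [set g | new_count g = y /\ old_indic g = a] =
  ('C(size f + y, size f)%:R * (V n.+1 (size f + y)%N / V n (size f))
     * (poch (theta + alpha) n) ^+ y * (theta + n%:R) ^+ (size f)
     * \prod_(l < size f)
         bern (nth false a l) ((#|nth finset.set0 f l|%:R - alpha) / (theta + n%:R)))%:E.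
Proof.
have Hofa : is_ofa f.
  by move: hf; rewrite hEFPF //; case: (is_ofa f) => //; rewrite ltxx.
have Hf : all (fun F => F != finset.set0) f := Hofa.
have Htn : theta + n%:R != 0.
  have : (1 : R) <= n%:R by rewrite ler1n.
  move=> H1; apply/lt0r_neq0; lra.
have pg : forall g : seq {set 'I_n.+1}, p n.+1 g = V n.+1 (size g) * \prod_(B <- g) cw alpha theta B.
  move=> g; rewrite hEFPF // /gibbs_efpf size_map.
  case: ifP => Hg.
    congr (_ * _); rewrite big_map; apply: eq_big_seq => B HB.
    have HB0 : B != finset.set0 by move/allP: Hg => /(_ B HB).
    by rewrite /cw HB0 mul1r.
  move/negbT: Hg; rewrite /is_ofa -has_predC => /hasP [B HB] /negPn /eqP HB0.
  by rewrite (big_rem B) //= HB0 cw0 mul0r mulr0.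
set L := LL f a y.
have HS : [set g | new_count g = y /\ old_indic g = a] `&` [set g | restrict_ofa g = f] = [set` L].
  apply/seteqP; split => g /=.
    by move=> [[Hy Ha] Hr]; rewrite /L mem_LL // Hr Hy Ha !eqxx.
  by rewrite /L mem_LL // => /and3P [/eqP -> /eqP -> /eqP ->].
rewrite /cond_prob HS esum_fset; last first.
  - move=> g _; rewrite lee_fin pg; apply: mulr_ge0; first exact: hV0.
    apply: prodr_ge0 => B _; rewrite /cw; apply: mulr_ge0; first apply: mulr_ge0.
    + by case: (B != finset.set0).
    + by apply: poch_ge0; lra.
    + by apply: poch_ge0; lra.
  - exact: finite_seq.
rewrite -fsbig_seq; last exact: uniq_LL.
rewrite sumEFin -EFinM; congr (_%:E).
rewrite (eq_big_seq (fun g => V n.+1 (size f + y)%N * \prod_(B <- g) cw alpha theta B)); last first.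
  move=> g; rewrite /L mem_LL // => /and3P [/eqP Hr /eqP Hy _].
  rewrite pg; congr (V _ _ * _).
  rewrite -Hr -Hy /restrict_ofa size_map /old_blocks size_filter /new_count.
  rewrite -(count_predC (fun B => res_set B != finset.set0) g); congr (_ + _)%N.
  by apply: eq_count => B /=; rewrite negbK.
rewrite -mulr_sumr /L sum_LL //.
set Q := \prod_(l < size f) (poch (1 - alpha) (#|nth finset.set0 f l| - 1) * poch (theta + alpha) (n - #|nth finset.set0 f l|)).
have HpQ : p n f = V n (size f) * Q.
  rewrite hEFPF // Hofa /gibbs_efpf size_map big_map (big_nth finset.set0) big_mkord.
  by [].
set Bp := \prod_(l < size f) bern (nth false a l) ((#|nth finset.set0 f l|%:R - alpha) / (theta + n%:R)).
have HcQ : \prod_(l < size f) cw alpha theta (liftB (nth finset.set0 f l) (nth false a l))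
    = (theta + n%:R) ^+ size f * Bp * Q.
  rewrite (eq_bigr (fun l : 'I_(size f) => (theta + n%:R) * bern (nth false a l) ((#|nth finset.set0 f l|%:R - alpha) / (theta + n%:R))
     * (poch (1 - alpha) (#|nth finset.set0 f l| - 1) * poch (theta + alpha) (n - #|nth finset.set0 f l|)))).
    by rewrite big_split /= [X in X * _]big_split /= big_const_ord iter_mulr_1.
  move=> l _; apply: cw_lift => //.
  by move/allP: Hf; apply; apply: mem_nth.
rewrite HcQ HpQ.
have HV0 : V n (size f) != 0.
  by apply/eqP => E; move: hf; rewrite HpQ E mul0r ltxx.
have HQ : Q != 0.
  by apply/eqP => E; move: hf; rewrite HpQ E mulr0 ltxx.
field.
by rewrite HV0 HQ.
Qed.
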